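(* Let $n$ be a nonzero integer and let $q(t)=n(t+t^{-1})+1-2n$. Then there exist a prime $p$ and integers $m,\ell$ coprime to $p$, such that if $p$ is odd then $p$ is coprime to $1-4m$ and $1-4m$ is a quadratic nonresidue modulo $p$, and such that $q(t)\in S_{p,m,\ell}$, if and only if $1-4n$ is not a perfect square.
   Context: For a prime $p$ and integers $m,\ell$, define the set of Laurent polynomials $$S_{p,m,\ell}=\{m(t+t^{-1})+1-2m\}\cup\{(m+\ell p^{2s+1})(t+t^{-1})+1-2(m+\ell p^{2s+1}) : s\in\mathbb{Z},\ s\geq 0\}.$$ An integer $x$ is a quadratic nonresidue modulo $p$ if $x\not\equiv y^2 \pmod p$ for all integers $y$. A perfect square means $k^2$ for some integer $k$ (so negative integers are not perfect squares). *)

(* Defs.v *)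
From mathcomp Require Import all_boot all_order all_algebra.
Set Implicit Arguments. Unset Strict Implicit. Unset Printing Implicit Defensive.
Import Order.TTheory GRing.Theory Num.Theory.
Local Open Scope ring_scope.

(* Integer Laurent polynomials in t, represented by their coefficient
   function: (f k) is the coefficient of t^k (k : int). *)
Definition laurent := int -> int.

Definition symq (c : int) : laurent :=
  fun k => if (k == 1) || (k == -1) then c
           else if k == 0 then 1 - 2 * c else 0.

Definition S_set (p : nat) (m l : int) : laurent -> Prop :=
  fun f => f = symq m \/
           exists s : nat, f = symq (m + l * (p%:Z) ^+ (2 * s + 1)).

Definition qnr (x : int) (p : nat) : Prop :=
  forall y : int, ~ (x = y ^+ 2 %[mod p%:Z])%Z.

Definition perfect_square (x : int) : Prop := exists k : int, x = k ^+ 2.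

(* Main.v *)
Require Import Defs.
From mathcomp Require Import all_boot all_order all_algebra all_fingroup all_solvable all_field.
From mathcomp Require Import zify ring lra.
Set Implicit Arguments. Unset Strict Implicit. Unset Printing Implicit Defensive.
Import Order.TTheory GRing.Theory Num.Theory.
Local Open Scope ring_scope.


Section Euler.
Variable p : nat.
Hypothesis pr_p : prime p.
Hypothesis odd_p : odd p.

Lemma p_gt2 : (2 < p)%N.
Proof. have := prime_gt1 pr_p. case: p odd_p => [|[|[|]]] //. Qed.

Definition hh := p./2.

Lemma p_eq : p = (hh * 2).+1.
Proof. rewrite /hh. have := odd_double_half p. rewrite odd_p -muln2 add1n. by move=> ->. Qed.

Lemma p1_eq : p.-1 = (hh * 2)%N.
Proof. by rewrite {1}p_eq. Qed.

Lemma hh_gt0 : (0 < hh)%N.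
Proof. have := p1_eq; have := p_gt2; lia. Qed.

Lemma fermatF (x : 'F_p) : x != 0 -> x ^+ p.-1 = 1.
Proof.
move=> nz; have H : x ^+ p.-1 * x = x.
  by rewrite -exprSr prednK ?prime_gt0 // -{2}(expf_card x) card_Fp.
by apply/eqP; rewrite -(inj_eq (mulIf nz)) mul1r H.
Qed.

Lemma prim_exists : exists g : 'F_p, (p.-1).-primitive_root g.
Proof.
have H1 : (0 < p.-1)%N by have := p_gt2; lia.
have H2 : all (p.-1).-unity_root (enum (predC1 (0 : 'F_p))).
  apply/allP => x; rewrite mem_enum => /= nz. by rewrite unity_rootE fermatF.
have H3 : (p.-1 <= size (enum (predC1 (0 : 'F_p)))%R)%N.
  by rewrite -cardE cardC1 card_Fp.
have /hasP[g _ pg] := has_prim_root H1 H2 (enum_uniq _) H3.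
by exists g.
Qed.

Lemma euler (x : 'F_p) : x != 0 ->
  [exists y : 'F_p, y * y == x] = (x ^+ hh == 1).
Proof.
move=> nz; apply/existsP/eqP.
- case=> y /eqP yx. have ynz : y != 0 by apply: contraNneq nz => y0; rewrite -yx y0 mul0r.
  by rewrite -yx -expr2 -exprM mulnC -p1_eq fermatF.
- move=> xh. have [g pg] := prim_exists.
  have [i xi] := prim_rootP pg (fermatF nz).
  move: xh; rewrite xi -exprM => /eqP; rewrite -(prim_order_dvd pg) => hd.
  have : (2 * hh %| (i:nat) * hh)%N by rewrite mulnC -p1_eq.
  rewrite dvdn_pmul2r ?hh_gt0 // => /dvdnP [j ij].
  exists (g ^+ j); by rewrite -expr2 -exprM ij mulnC.
Qed.

Lemma euler_pm (x : 'F_p) : x != 0 -> x ^+ hh = 1 \/ x ^+ hh = -1.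
Proof.
move=> nz; have : (x ^+ hh) ^+ 2 == 1 by rewrite -exprM -p1_eq fermatF.
by rewrite sqrf_eq1 => /orP [] /eqP; [left|right].
Qed.

End Euler.

Definition leg (p : nat) (z : int) : int :=
  if (p%:Z %| z)%Z then 0 else if [exists y : 'F_p, y * y == z%:~R] then 1 else -1.

Section Leg.
Variable p : nat.
Hypothesis pr_p : prime p.
Hypothesis odd_p : odd p.

Lemma chF : p \in [pchar 'F_p]. Proof. exact: pchar_Fp. Qed.

Lemma intF_eq0 (z : int) : ((z%:~R : 'F_p) == 0) = (p%:Z %| z)%Z.
Proof. by rewrite (dvdz_pcharf chF). Qed.

Lemma leg_F z : (leg p z)%:~R = (z%:~R : 'F_p) ^+ hh p.
Proof.
rewrite /leg; case: ifP => [pz|npz].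
  move: pz; rewrite -intF_eq0 => /eqP ->. rewrite expr0n.
  by have := hh_gt0 pr_p odd_p; case: (hh p).
have nz : (z%:~R : 'F_p) != 0 by rewrite intF_eq0 npz.
rewrite euler //; case: ifP => [/eqP -> //|ne].
by case: (euler_pm pr_p odd_p nz) => h; [move: ne; rewrite h eqxx | rewrite h].
Qed.

Lemma small_inj (x y : int) : `|x| <= 1 -> `|y| <= 1 ->
  (x%:~R : 'F_p) = y%:~R -> x = y.
Proof.
move=> hx hy /eqP; rewrite -subr_eq0 -rmorphB /= intF_eq0 dvdzE /= => hd.
have p2 := p_gt2 pr_p odd_p.
have : `|x - y|%N = 0%N.
  apply/eqP; apply: contraTT hd => nz. rewrite gtnNdvd //.
  rewrite lt0n //. apply: (@leq_ltn_trans 2) => //.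
  have : (`|x - y| <= 2)%R.
    apply: (le_trans (ler_normB _ _)). have -> : (2 : int) = 1 + 1 by [].
    exact: lerD.
  lia.
move/eqP; rewrite absz_eq0 subr_eq0 => /eqP //.
Qed.

Lemma leg_bound z : `|leg p z| <= 1.
Proof. by rewrite /leg; case: ifP => //; case: ifP. Qed.

Lemma legM a b : leg p (a * b) = leg p a * leg p b.
Proof.
apply: small_inj; rewrite ?leg_bound //.
  by rewrite normrM; apply: mulr_ile1; rewrite ?normr_ge0 ?leg_bound.
by rewrite rmorphM /= !leg_F rmorphM /= exprMn.
Qed.

Lemma leg1 : leg p 1 = 1.
Proof. apply: small_inj; rewrite ?leg_bound // leg_F /= expr1n. by []. Qed.

Lemma leg_neg1 : leg p (-1) = (-1) ^+ hh p.
Proof.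
apply: small_inj; rewrite ?leg_bound //.
  by rewrite normrX normrN normr1 expr1n.
by rewrite leg_F rmorphXn /= rmorphN1.
Qed.

Lemma leg_cong a b : (a%:~R : 'F_p) = b%:~R -> leg p a = leg p b.
Proof. by move=> e; apply: small_inj; rewrite ?leg_bound // !leg_F e. Qed.

Lemma leg_modz a b : (a = b %[mod p%:Z])%Z -> leg p a = leg p b.
Proof.
move/eqP; rewrite eqz_mod_dvd -intF_eq0 rmorphB /= subr_eq0 => /eqP.
exact: leg_cong.
Qed.

Lemma leg_nonres : exists r : int, leg p r = -1.
Proof.
have [g pg] := prim_exists pr_p odd_p.
exists ((val g)%:Z).
have gF : ((val g)%:Z)%:~R = g :> 'F_p by rewrite -pmulrn natr_Zp.
have gnz : g != 0.
  rewrite (prim_root_eq0 pg); apply/eqP; have := p_gt2 pr_p odd_p; lia.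
have : leg p (val g)%:Z != 1.
  apply/negP => /eqP h1.
  have : (leg p (val g)%:Z)%:~R = 1 :> 'F_p by rewrite h1.
  rewrite leg_F gF => /eqP; rewrite -(prim_order_dvd pg) => hd.
  have := hh_gt0 pr_p odd_p; have := p1_eq odd_p.
  move: hd => /dvdn_leq h2 h3 h4. have := h2 h4. lia.
rewrite /leg; case: ifP => [|_]; last by case: ifP.
by rewrite -intF_eq0 gF (negbTE gnz).
Qed.

Lemma leg_qnr z : leg p z = -1 -> qnr z p /\ coprimez z p.
Proof.
rewrite /leg; case: ifP => // npz; case: ifP => // nsq _; split.
  move=> y /eqP; rewrite eqz_mod_dvd -intF_eq0 rmorphB /= subr_eq0 => /eqP e.
  move/negbT/negP: nsq; apply; apply/existsP; exists (y%:~R); by rewrite e rmorphXn /= expr2.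
rewrite coprimezE coprime_sym /= prime_coprime //.
by move: npz; rewrite dvdzE => ->.
Qed.

End Leg.

Section Gauss.
Variable p : nat.
Hypothesis pr_p : prime p.
Hypothesis odd_p : odd p.
Variable a : nat.
Hypothesis npa : ~~ (p %| a)%N.

Let h := hh p.
Let hp : p = (h * 2).+1. Proof. exact: p_eq. Qed.

Definition rr (k : nat) := ((a * k.+1) %% p)%N.
Definition ff (k : nat) := if (rr k <= h)%N then rr k else (p - rr k)%N.

Lemma rr_lt k : (rr k < p)%N.
Proof. by rewrite ltn_mod prime_gt0. Qed.

Lemma rr_pos k : (k < h)%N -> (0 < rr k)%N.
Proof.
move=> kh; rewrite lt0n; apply/negP => /eqP.
move/eqP; rewrite -/(dvdn p _) Euclid_dvdM // (negbTE npa) /=.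
rewrite gtnNdvd //; lia.
Qed.

Lemma ff_bound k : (k < h)%N -> (0 < ff k <= h)%N.
Proof.
move=> kh; have := rr_pos kh; have := rr_lt k; rewrite /ff.
case: ifP; lia.
Qed.

Lemma ffF k : (k < h)%N ->
  ((a * k.+1)%:R : 'F_p) = (-1) ^+ (h < rr k)%N * (ff k)%:R.
Proof.
move=> kh; rewrite /ff -(Fp_nat_mod pr_p) -/(rr k).
case: leqP => hr /=; first by rewrite mul1r.
rewrite expr1 natrB; last by have := rr_lt k; lia.
by rewrite (pchar_Fp_0 pr_p) sub0r mulN1r opprK.
Qed.

Lemma natF_eq0 n : ((n%:R : 'F_p) == 0) = (p %| n)%N.
Proof. by rewrite (dvdn_pcharf (pchar_Fp pr_p)). Qed.

Lemma ff_inj k k' : (k < h)%N -> (k' < h)%N -> ff k = ff k' -> k = k'.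
Proof.
move=> kh kh' e.
have anz : (a%:R : 'F_p) != 0 by rewrite natF_eq0.
have H1 := ffF kh; have H2 := ffF kh'.
have E : forall b : bool, ((-1) ^+ b : 'F_p) * (-1) ^+ b = 1.
  by case; rewrite ?expr1 ?mulN1r ?opprK ?mulr1.
have : ((a * k.+1)%:R : 'F_p) * (-1) ^+ (h < rr k)%N
     = ((a * k'.+1)%:R : 'F_p) * (-1) ^+ (h < rr k')%N.
  by rewrite H1 H2 e mulrC mulrA E mul1r mulrC mulrA E mul1r.
rewrite !natrM.
have same : (k.+1%:R : 'F_p) = k'.+1%:R -> k = k'.
  move=> e2. have := congr1 (fun x : 'F_p => nat_of_ord x) e2 => /=; rewrite !(val_Fp_nat pr_p).
  rewrite !modn_small; lia.
have opp : (a%:R * (k.+1 + k'.+1)%:R : 'F_p) = 0 -> k = k'.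
  move/eqP; rewrite mulf_eq0 (negbTE anz) /= natF_eq0 => hd; exfalso.
  have := dvdn_leq _ hd; lia.
case: (h < rr k)%N; case: (h < rr k')%N; rewrite ?expr1 ?expr0 ?mulr1 ?mulrN1.
- by move/oppr_inj/(mulfI anz).
- by move=> e2; apply: opp; rewrite natrD mulrDr -e2 addrN.
- by move=> e2; apply: opp; rewrite natrD mulrDr e2 addNr.
- by move/(mulfI anz).
Qed.

Lemma ffm1_lt (k : 'I_h) : ((ff k).-1 < h)%N.
Proof. have := ff_bound (ltn_ord k); lia. Qed.

Definition gg (k : 'I_h) : 'I_h := Ordinal (ffm1_lt k).

Lemma gg_val (k : 'I_h) : (gg k).+1 = ff k.
Proof. rewrite /=; have := ff_bound (ltn_ord k); lia. Qed.

Lemma gg_inj : injective gg.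
Proof.
move=> k k' e; apply: val_inj; apply: ff_inj; rewrite ?ltn_ord //.
have h1 := gg_val k; have h2 := gg_val k'; rewrite e in h1; exact: (etrans (esym h1) h2).
Qed.

Lemma reindex_ff (R : Type) (idx : R) (op : Monoid.com_law idx) (G : nat -> R) :
  \big[op/idx]_(k < h) G (ff k) = \big[op/idx]_(k < h) G k.+1.
Proof.
rewrite [RHS](reindex_inj gg_inj) /=. apply: eq_bigr => k _. by rewrite gg_val.
Qed.

Lemma gauss_odd : odd a ->
  (a%:R : 'F_p) ^+ h = (-1) ^+ (\sum_(k < h) (a * k.+1) %/ p)%N.
Proof.
move=> odda.
set mu := (\sum_(k < h) (h < rr k))%N.
set S := (\sum_(k < h) (a * k.+1) %/ p)%N.
have prodF : \prod_(k < h) ((a * k.+1)%:R : 'F_p) = a%:R ^+ h * \prod_(k < h) (k.+1)%:R.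
  rewrite (eq_bigr (fun k : 'I_h => a%:R * (k.+1)%:R)); last by move=> k _; rewrite natrM.
  by rewrite big_split /= prodr_const card_ord.
have prodG : \prod_(k < h) ((a * k.+1)%:R : 'F_p) = (-1) ^+ mu * \prod_(k < h) (k.+1)%:R.
  rewrite (eq_bigr _ (fun k _ => ffF (ltn_ord k))) big_split /= prodrXr.
  by rewrite (@reindex_ff _ _ _ (fun n => (n%:R : 'F_p))).
have nz : \prod_(k < h) ((k.+1)%:R : 'F_p) != 0.
  apply/prodf_neq0 => k _; rewrite natF_eq0 gtnNdvd //; have := ltn_ord k; lia.
have e1 : (a%:R : 'F_p) ^+ h = (-1) ^+ mu by apply: (mulIf nz); rewrite -prodF prodG.
rewrite e1 -signr_odd -[in RHS]signr_odd; congr (_ ^+ _).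
set T := (\sum_(k < h) k.+1)%N.
set X := (\sum_(k < h) (h < rr k) * rr k)%N.
have HA : (\sum_(k < h) a * k.+1 = a * T)%N by rewrite big_distrr.
have HB : (\sum_(k < h) a * k.+1 = S * p + \sum_(k < h) rr k)%N.
  rewrite /S big_distrl -big_split /=; apply: eq_bigr => k _; exact: divn_eq.
have HC : (\sum_(k < h) rr k + mu * p = T + 2 * X)%N.
  have -> : T = (\sum_(k < h) ff k)%N by rewrite (@reindex_ff _ _ _ id).
  rewrite /mu /X big_distrl big_distrr -!big_split /=; apply: eq_bigr => k _.
  rewrite /ff; have := rr_lt k; case: (leqP (rr k) h) => /=; lia.
have E : (a * T + mu * p = S * p + T + 2 * X)%N by move: HA HB HC; lia.
have := congr1 odd E; rewrite !oddD !oddM odda odd_p /=.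
by case: (odd T); case: (odd mu); case: (odd S); case: (odd X).
Qed.

End Gauss.

Local Close Scope ring_scope.

Lemma aux a b k : (k.+1 <= a)%N -> ((b * 2).+1 * k.+1 < b.+1 * (a * 2).+1)%N.
Proof.
move=> h. apply: (@leq_ltn_trans ((b * 2).+1 * a)); first by rewrite leq_mul2l h orbT.
nia.
Qed.

Lemma sum_lt N m : (\sum_(j < N) (j < m) = minn N m)%N.
Proof.
elim: N => [|N IH]; first by rewrite big_ord0 min0n.
rewrite big_ord_recr /= IH; case: (ltnP N m) => h /=; lia.
Qed.

Lemma floor_count p q k : prime p -> prime q -> odd p -> odd q -> p != q ->
  (k < hh p)%N ->
  ((q * k.+1) %/ p = \sum_(j < hh q) (p * j.+1 < q * k.+1))%N.
Proof.
move=> pp pq op oq npq kh.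
have ep := p_eq op; have eq := p_eq oq.
have p0 : (0 < p)%N by apply: prime_gt0.
have ndv : ~~ (p %| q * k.+1)%N.
  rewrite Euclid_dvdM // dvdn_prime2 // negb_or npq /= gtnNdvd //; lia.
set m := ((q * k.+1) %/ p)%N.
have mle : (m <= hh q)%N.
  rewrite -ltnS ltn_divLR //. have := aux (hh q) kh. by rewrite -ep -eq.
rewrite (eq_bigr (fun j : 'I_(hh q) => nat_of_bool (j < m)%N)); first by rewrite sum_lt; lia.
move=> j _; congr nat_of_bool; rewrite ltn_neqAle /m -/(leq j.+1 _) (leq_divRL _ _ p0) [(j.+1 * p)%N]mulnC.
have -> : (p * j.+1 != q * k.+1) = true.
  apply/negP => /eqP e; move: ndv; rewrite -e dvdn_mulr //.
by [].
Qed.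

Lemma lattice p q : prime p -> prime q -> odd p -> odd q -> p != q ->
  (\sum_(k < hh p) (q * k.+1) %/ p + \sum_(j < hh q) (p * j.+1) %/ q
     = hh p * hh q)%N.
Proof.
move=> pp pq op oq npq.
have ndv : forall k j, (k < hh p)%N -> p * j.+1 != q * k.+1.
  move=> k j kh; apply/negP => /eqP e.
  have : (p %| q * k.+1)%N by rewrite -e dvdn_mulr.
  have ep := p_eq op.
  rewrite Euclid_dvdM // dvdn_prime2 // (negbTE npq) /= gtnNdvd //; lia.
rewrite (eq_bigr _ (fun k _ => floor_count pp pq op oq npq (ltn_ord k))).
rewrite (eq_bigr _ (fun j _ => floor_count pq pp oq op (negbT (introF eqP (fun e => (negP npq) (introT eqP (esym e))))) (ltn_ord j))).
rewrite [X in (_ + X)%N]exchange_big -big_split /=.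
rewrite (eq_bigr (fun _ => hh q)).
  by rewrite sum_nat_const card_ord.
move=> k _; rewrite -big_split /=.
rewrite (eq_bigr (fun _ => 1%N)); first by rewrite sum_nat_const card_ord muln1.
move=> j _; have := ndv k j (ltn_ord k).
case: ltngtP => //.
Qed.

Local Open Scope ring_scope.

Lemma leg_gauss p q : prime p -> odd p -> prime q -> odd q -> p != q ->
  leg p q%:Z = (-1) ^+ (\sum_(k < hh p) (q * k.+1) %/ p)%N.
Proof.
move=> pp op pq oq npq.
apply: (small_inj pp op); first exact: leg_bound.
  by rewrite normrX normrN normr1 expr1n.
rewrite leg_F // -pmulrn gauss_odd //.
  by rewrite rmorphXn /= rmorphN1.
by rewrite dvdn_prime2 // npq.
Qed.

Definition star (q : nat) : int := (-1) ^+ hh q * q%:Z.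

Lemma legX p z n : prime p -> odd p -> leg p (z ^+ n) = leg p z ^+ n.
Proof.
move=> pp op; elim: n => [|n IH]; first by rewrite !expr0 leg1.
by rewrite !exprS legM // IH.
Qed.

Lemma recip p q : prime p -> odd p -> prime q -> odd q -> p != q ->
  leg p (star q) = leg q p%:Z.
Proof.
move=> pp op pq oq npq.
rewrite /star legM // legX // leg_neg1 // -exprM.
rewrite leg_gauss // leg_gauss // 1?eq_sym //.
have := lattice pp pq op oq npq.
set S1 := (\sum_(k < hh p) _)%N; set S2 := (\sum_(k < hh q) _)%N.
move=> <-; rewrite -exprD.
have -> : (S1 + S2 + S1 = S2 + S1 * 2)%N by lia.
by rewrite exprD exprM sqrr_sign mulr1.
Qed.

Lemma leg_cases p z : leg p z = 0 \/ leg p z = 1 \/ leg p z = -1.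
Proof. rewrite /leg; case: ifP => _; first by left. by case: ifP => _; right; [left|right]. Qed.

Lemma prime_seq N : (0 < N)%N ->
  exists s : seq nat, all prime s /\ N = (\prod_(q <- s) q)%N.
Proof.
elim: N {-2}N (leqnn N) => [|M IH] N hN N0; first by move: hN N0; case: N.
case: (ltnP 1 N) => N1; last first.
  by exists [::]; split => //; rewrite big_nil; lia.
have pp := pdiv_prime N1; have pd := pdiv_dvd N.
have c0 : (0 < N %/ pdiv N)%N by rewrite divn_gt0 ?prime_gt0 // dvdn_leq.
have cl : (N %/ pdiv N < N)%N by rewrite ltn_Pdiv // prime_gt1.
have [s [ap es]] := IH (N %/ pdiv N)%N (leq_trans cl hN) c0.
exists (pdiv N :: s); split; first by rewrite /= pp ap.
by rewrite big_cons -es mulnC divnK.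
Qed.

Lemma star_mod4 q : odd q -> exists k : int, star q = 4 * k + 1.
Proof.
move=> oq; have hq := p_eq oq; have h2 := odd_double_half (hh q).
rewrite /star -signr_odd.
move: h2; case: (odd (hh q)) => /= h2.
  exists (- (hh q)./2%:Z - 1); rewrite expr1 mulN1r. lia.
exists ((hh q)./2%:Z); rewrite expr0 mul1r. lia.
Qed.

Lemma star_prod (s : seq nat) : all odd s ->
  (exists b : bool, \prod_(q <- s) star q = (-1) ^+ b * ((\prod_(q <- s) q)%N)%:Z)
  /\ exists k : int, \prod_(q <- s) star q = 4 * k + 1.
Proof.
elim: s => [|q s IH] /=.
  by rewrite !big_nil; split; [exists false | exists 0].
case/andP => oq /IH [[b eb] [k ek]]; rewrite !big_cons; split.
  exists (odd (hh q + b)); rewrite eb signr_odd /star exprD PoszM. ring.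
have [k0 e0] := star_mod4 oq.
exists (4 * k0 * k + k0 + k); rewrite ek e0. ring.
Qed.

Lemma D_eq (D : int) s : all odd s -> `|D|%N = (\prod_(q <- s) q)%N ->
  (exists k, D = 4 * k + 1) -> D = \prod_(q <- s) star q.
Proof.
move=> os eN [k' ek'].
have [[b eb] [k ek]] := star_prod os.
have eD := intEsign D; rewrite eN in eD.
move: eb eD; set N := ((\prod_(q <- s) q)%N)%:Z.
case: b; case: (D < 0) => /=; rewrite ?expr1 ?expr0 ?mulN1r ?mul1r => eb eD; clearbody N; [by rewrite eD eb|idtac|idtac|by rewrite eD eb].
- move: ek ek'; rewrite eb eD; lia.
- move: ek ek'; rewrite eb eD; lia.
Qed.

Lemma odd_count (s : seq nat) : ~ perfect_square (\prod_(q <- s) star q) ->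
  exists2 q1, q1 \in s & odd (count_mem q1 s).
Proof.
move=> nsq; case: (boolP (has (fun q => odd (count_mem q s)) s)).
  by case/hasP => q1 hq1 oq1; exists q1.
move/hasPn => ev; exfalso; apply: nsq.
exists (\prod_(q <- undup s) star q ^+ (count_mem q s)./2).
rewrite -prodr_undup_exp_count -prodrXl; apply: eq_big_seq => q; rewrite mem_undup => qs.
rewrite -exprM; congr (_ ^+ _).
have := odd_double_half (count_mem q s); have := ev q qs.
case: (odd _) => //= _; rewrite add0n -muln2. by move=> ->.
Qed.

Lemma descent (s : seq nat) (D : int) : all prime s -> all odd s ->
  D = \prod_(q <- s) star q ->
  forall b : nat, (0 < b)%N -> odd b -> (forall q, q \in s -> ~~ (q %| b)%N) ->
  \prod_(q <- s) leg q b%:Z = -1 -> exists p, [/\ prime p, odd p & leg p D = -1].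
Proof.
move=> ps os eD b.
elim: b {-2}b (leqnn b) => [|M IH] b hb b0 ob nd; first by have := leq_trans b0 hb.
case: (ltnP 1 b) => b1; last first.
  have -> : b = 1%N by lia.
  rewrite (eq_big_seq (fun _ => 1)) ?big1_eq //.
  move=> q qs; apply: leg1; [exact: (allP ps) | exact: (allP os)].
set p := pdiv b.
have pp : prime p := pdiv_prime b1.
have pd : (p %| b)%N := pdiv_dvd b.
have op : odd p.
  case: (even_prime pp) => // e; move: ob pd; rewrite e dvdn2 => ->. by [].
set c := (b %/ p)%N.
have ebc : b = (c * p)%N by rewrite divnK.
have c0 : (0 < c)%N by rewrite divn_gt0 ?prime_gt0 // dvdn_leq.
have cl : (c < b)%N by rewrite ltn_Pdiv // prime_gt1.
have oc : odd c by move: ob; rewrite ebc oddM => /andP [].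
have ndc : forall q, q \in s -> ~~ (q %| c)%N.
  move=> q qs; apply: contra (nd q qs) => qc; rewrite ebc dvdn_mulr //.
have split : \prod_(q <- s) leg q b%:Z
           = leg p D * \prod_(q <- s) leg q c%:Z.
  rewrite (eq_big_seq (fun q => leg q p%:Z * leg q c%:Z)); last first.
    move=> q qs; rewrite ebc PoszM mulrC legM //; [exact: (allP ps) | exact: (allP os)].
  rewrite big_split /=; congr (_ * _).
  rewrite eD (big_morph (leg p) (legM pp op) (leg1 pp op)).
  apply: eq_big_seq => q qs; rewrite recip //; [exact: (allP ps) | exact: (allP os)|].
  apply/eqP => epq; move: (nd q qs); rewrite -epq pd. by [].
move=> hprod; rewrite split in hprod.
case: (leg_cases p D) => [e0|[e1|em1]].
- by move: hprod; rewrite e0 mul0r.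
- move: hprod; rewrite e1 mul1r => hc.
  exact: (IH c (leq_trans cl hb) c0 oc ndc hc).
- by exists p; split.
Qed.

Lemma leg_dvd p z : (p%:Z %| z)%Z -> leg p z = 0.
Proof. by rewrite /leg => ->. Qed.

Lemma leg_natmod q (x y : nat) : prime q -> odd q -> (x = y %[mod q])%N -> leg q x%:Z = leg q y%:Z.
Proof.
move=> pq oq e; apply: leg_modz => //; by rewrite !modz_nat e.
Qed.

Lemma exists_nonres (D : int) : (exists k, D = 4 * k + 1) -> ~ perfect_square D ->
  exists p, [/\ prime p, odd p & leg p D = -1].
Proof.
move=> [k ek] nsq.
have D0 : (0 < `|D|)%N by rewrite absz_gt0; apply/eqP => D0; move: ek; rewrite D0; lia.
have [s [ps eN]] := prime_seq D0.
have oN : odd `|D|%N.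
  have : ~~ (2 %| D)%Z by rewrite ek; apply/negP; lia.
  by rewrite dvdzE /= dvdn2 negbK.
have os : all odd s.
  apply/allP => q qs; have pq := allP ps q qs.
  have qN : (q %| `|D|)%N by rewrite eN (big_rem q qs) /= dvdn_mulr.
  case: (even_prime pq) => // e; move: oN qN; rewrite e dvdn2 => ->. by [].
have eD := D_eq os eN (ex_intro _ k ek).
have [q1 q1s cq1] : exists2 q1, q1 \in s & odd (count_mem q1 s)
  by apply: odd_count; rewrite -eD.
have pq1 := allP ps q1 q1s; have oq1 := allP os q1 q1s.
have [r hr] := leg_nonres pq1 oq1.
set r0 := `|(r %% q1%:Z)%Z|%N.
have hr0 : leg q1 r0%:Z = -1.
  rewrite -hr; apply: leg_modz => //.
  by rewrite /r0 gez0_abs ?modz_ge0 // ?modz_mod //; apply/eqP => e; move: pq1; rewrite -[q1]/(`|q1%:Z|%N) e.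
set M := (2 * \prod_(q <- s | q != q1) q)%N.
have co : coprime q1 M.
  rewrite coprimeMr coprimen2 oq1 /= big_seq_cond.
  apply: (@big_ind _ (fun x => coprime q1 x)) => //; first by rewrite coprimen1.
    by move=> x y hx hy; rewrite coprimeMr hx hy.
  move=> q /andP [qs nq]; rewrite prime_coprime // dvdn_prime2 //; last exact: (allP ps).
  by rewrite eq_sym.
set b := chinese q1 M r0 1.
have hb1 := chinese_modl co r0 1%N; have hb2 := chinese_modr co r0 1%N.
rewrite -/b in hb1 hb2.
have legb : forall q, q \in s -> leg q b%:Z = if q == q1 then -1 else 1.
  move=> q qs; have pq := allP ps q qs; have oq := allP os q qs.
  case: eqP => [->|nq].
    by rewrite (leg_natmod pq1 oq1 hb1).
  rewrite (@leg_natmod q b 1 pq oq) ?leg1 //.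
  have qM : (q %| M)%N.
    rewrite dvdn_mull //; rewrite (big_rem q qs) /=; last first.
    rewrite (negbTE (introN eqP nq)) /= dvdn_mulr //.
  by rewrite -(modn_dvdm _ qM) hb2 (modn_dvdm _ qM).
apply: (descent ps os eD (b := b)).
- rewrite lt0n; apply/eqP => b0; move: (legb q1 q1s); rewrite eqxx b0 leg_dvd ?dvdz0 //.
- have M2 : (2 %| M)%N by rewrite dvdn_mulr.
  have : (b %% 2 = 1)%N by rewrite -(modn_dvdm _ M2) hb2 (modn_dvdm _ M2).
  by rewrite modn2; case: (odd b).
- move=> q qs; apply/negP => qb; move: (legb q qs); rewrite leg_dvd; last by rewrite dvdzE.
  by case: eqP.
- rewrite (eq_big_seq (fun q => (-1) ^+ (q == q1)%N)); last first.
    by move=> q qs; rewrite legb //; case: eqP.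
  rewrite prodrXr -signr_odd.
  suff -> : (\sum_(q <- s) (q == q1) = count_mem q1 s)%N by rewrite cq1 expr1.
  elim: (s) => [|x t IH]; first by rewrite big_nil.
  by rewrite big_cons IH /=.
Qed.

Lemma symq_inj c d : symq c = symq d -> c = d.
Proof. by move/(congr1 (fun f => f 1)); rewrite /symq /=. Qed.

Lemma not_sq_odd (n t : int) : n = 2 * t + 1 -> ~ perfect_square (1 - 4 * n).
Proof.
move=> -> [k hk].
have ek := divz_eq k 4.
have c0 : 0 <= (k %% 4)%Z by rewrite modz_ge0.
have c4 : (k %% 4)%Z < 4 by have := ltz_mod k (d := 4); apply.
move: ek c0 c4 hk; set i := (k %/ 4)%Z; set c := (k %% 4)%Z => ek c0 c4.
have : k ^+ 2 = 16 * (i * i) + 8 * (c * i) + c * c by rewrite ek; ring.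
move=> ->; have : c = 0 \/ c = 1 \/ c = 2 \/ c = 3 by lia.
case=> [->|[->|[->|->]]]; lia.
Qed.

Lemma odd_of_coprime2 m : coprimez m 2 -> exists t, m = 2 * t + 1.
Proof.
rewrite coprimezE /= coprimen2 => om.
exists (m %/ 2)%Z.
have em := divz_eq m 2.
have c0 : 0 <= (m %% 2)%Z by rewrite modz_ge0.
have c2 : (m %% 2)%Z < 2 by have := ltz_mod m (d := 2); apply.
have : (m %% 2)%Z != 0.
  apply/eqP => e; have : (2 %| m)%Z by apply/dvdz_mod0P.
  by rewrite dvdzE /= dvdn2 om.
move: em c0 c2; set c := (m %% 2)%Z; set i := (m %/ 2)%Z; lia.
Qed.

Theorem mainTheorem4 (n : int) (hn : n != 0) :
  (exists (p : nat) (m l : int),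
      [/\ prime p, coprimez m p%:Z, coprimez l p%:Z,
          (odd p -> coprimez (1 - 4 * m) p%:Z /\ qnr (1 - 4 * m) p)
        & S_set p m l (symq n)])
  <-> ~ perfect_square (1 - 4 * n).
Proof.
split.
- move=> [p [m [l [pp cm cl hodd hS]]]].
  case: (even_prime pp) => [p2 | op].
  + subst p. have [t em] := odd_of_coprime2 cm.
    case: hS => [/symq_inj en | [s /symq_inj en]].
      by apply: (not_sq_odd (t := t)); rewrite en.
    apply: (not_sq_odd (t := t + l * 2 ^+ (2 * s))).
    by rewrite en em addn1 exprS; ring.
  + have [_ qm] := hodd op.
    move=> [k hk]; apply: (qm k).
    case: hS => [/symq_inj en | [s /symq_inj en]].
      by rewrite -en hk.
    have -> : 1 - 4 * m = (4 * l * (p%:Z) ^+ (2 * s)) * p%:Z + k ^+ 2.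
      by rewrite -hk en addn1 exprS; ring.
    by rewrite modzMDl.
- move=> nsq.
  have [p [pp op hl]] : exists p, [/\ prime p, odd p & leg p (1 - 4 * n) = -1].
    by apply: exists_nonres => //; exists (- n); ring.
  exists p, n, 1; split => //.
  + rewrite coprimezE /= coprime_sym prime_coprime //; apply/negP => pn.
    have : leg p (1 - 4 * n) = leg p 1.
      apply: leg_modz => //.
      have /dvdzP [j ej] : (p%:Z %| n)%Z by rewrite dvdzE.
      have -> : 1 - 4 * n = (- 4 * j) * p%:Z + 1 by rewrite ej; ring.
      by rewrite modzMDl.
    by rewrite hl leg1.
  + by rewrite coprimezE /= coprime1n.
  + move=> _; have [h1 h2] := leg_qnr pp hl; split => //.
  + by left.
Qed.
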